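(* In the setting of problem (P) with $f_0(x)=\mathbb{E}_\xi[F(x,\xi)]$, run Algorithm LCSPG with $\gamma_k>L_0/2$, $\beta_k\in(0,2\gamma_k-L_0)$, and suppose there is a constant $B>0$ such that $\|\lambda^{k+1}\|\le B$ for all $k$ and all realizations. Let $\zeta^k:=G^k-\nabla f_0(x^k)$, $D:=\sqrt{(\psi_0(x^0)-\psi_0^* )/L_0}$ and let $\alpha_0,\dots,\alpha_K\ge0$ be nondecreasing. Then $$\sum_{k=0}^K\frac{\alpha_k(2\gamma_k-\beta_k-L_0)}{4(\gamma_k+L_0+2B\|L\|)^2}\|\partial_x\mathcal{L}(x^{k+1},\lambda^{k+1})\|_-^2\le L_0D^2\alpha_K+\sum_{k=0}^K\Big(\frac{\alpha_k(2\gamma_k-\beta_k-L_0)}{2(\gamma_k+L_0+2B\|L\|)^2}+\frac{\alpha_K}{2\beta_k}\Big)\|\zeta^k\|^2,$$ $$\sum_{k=0}^K\alpha_k(2\gamma_k-\beta_k-L_0)\langle\lambda^{k+1},|\psi(x^{k+1})-\eta|\rangle\le2BL_0\|L\|D^2\alpha_K+B\|L\|\sum_{k=0}^K\frac{\alpha_K\|\zeta^k\|^2}{\beta_k}+B\sum_{k=0}^K\alpha_k(2\gamma_k-\beta_k-L_0)\|\eta-\eta^k\|,$$ where $|\cdot|$ is componentwise.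
   Context: Problem (P): minimize $\psi_0(x):=f_0(x)+\chi_0(x)$ over $x\in\mathbb{R}^d$ subject to $\psi_i(x):=f_i(x)+\chi_i(x)\le\eta_i$, $i\in[m]:=\{1,\dots,m\}$. Standing assumptions: $\chi_0$ is proper, convex, lower semicontinuous; each $\chi_i$ ($i\in[m]$) is convex and continuous on $\mathrm{dom}\,\chi_0$; each $f_i$ ($i=0,\dots,m$) is differentiable with $L_i$-Lipschitz gradient on $\mathrm{dom}\,\chi_0$; $L:=(L_1,\dots,L_m)^\top$; the optimal value $\psi_0^*$ of (P) is finite; the feasible set $\mathcal{X}:=\{x\in\mathrm{dom}\,\chi_0:\psi_i(x)\le\eta_i,\ i\in[m]\}$ is nonempty and compact. Write $\psi=(\psi_1,\dots,\psi_m)^\top$; vector inequalities are componentwise. Subdifferential: $\partial\psi_i(x):=\nabla f_i(x)+\partial\chi_i(x)$. Lagrangian $\mathcal{L}(x,\lambda)=\psi_0(x)+\sum_{i=1}^m\lambda_i(\psi_i(x)-\eta_i)$, $\partial_x\mathcal{L}(x,\lambda):=\partial\psi_0(x)+\sum_i\lambda_i\partial\psi_i(x)$; for a set $S$, $\|S\|_-:=\inf\{\|s\|:s\in S\}$. Stochastic setting: $f_0(x)=\mathbb{E}_\xi[F(x,\xi)]$ with $F(\cdot,\xi)$ differentiable; a stochastic first-order oracle returns $\nabla F(x,\xi)$ with $\mathbb{E}[\nabla F(x,\xi)]=\nabla f_0(x)$ and $\mathbb{E}\|\nabla F(x,\xi)-\nabla f_0(x)\|^2\le\sigma^2$. Algorithm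 LCSPG: given $x^0\in\mathrm{dom}\,\chi_0$, $\eta^0$ with $\psi(x^0)<\eta^0<\eta$, batch sizes $b_k$, $\gamma_k>0$. At step $k$: draw $b_k$ i.i.d. samples $\xi_{1,k},\dots,\xi_{b_k,k}$ and set $G^k=\frac1{b_k}\sum_{j}\nabla F(x^k,\xi_{j,k})$; set $\psi_0^k(x)=\langle G^k,x\rangle+\frac{\gamma_k}{2}\|x-x^k\|^2+\chi_0(x)$ and, for $i\in[m]$, $\psi_i^k(x)=f_i(x^k)+\langle\nabla f_i(x^k),x-x^k\rangle+\frac{L_i}{2}\|x-x^k\|^2+\chi_i(x)$; let $x^{k+1}$ minimize $\psi_0^k$ subject to $\psi_i^k(x)\le\eta_i^k$, $i\in[m]$; set $\eta^{k+1}=\eta^k+\delta^k$ with $\delta^k>0$ and $\eta^{k+1}<\eta$. A Lagrange multiplier $\lambda^{k+1}\in\mathbb{R}^m_+$ satisfies $0\in\partial\psi_0^k(x^{k+1})+\sum_i\lambda_i^{k+1}\partial\psi_i^k(x^{k+1})$ and $\lambda_i^{k+1}(\psi_i^k(x^{k+1})-\eta_i^k)=0$. *)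

(* Defs.v *)
From HB Require Import structures.
From mathcomp Require Import all_boot all_order all_algebra.
From mathcomp Require Import all_classical all_reals all_analysis.
Set Implicit Arguments. Unset Strict Implicit. Unset Printing Implicit Defensive.
Import Order.TTheory GRing.Theory Num.Theory.
Local Open Scope ring_scope.
Local Open Scope classical_set_scope.

Definition dotv {R : realType} {n : nat} (u v : 'rV[R]_n) : R :=
  \sum_(i < n) u 0 i * v 0 i.
Definition enorm {R : realType} {n : nat} (u : 'rV[R]_n) : R := Num.sqrt (dotv u u).

Definition has_grad {R : realType} {n : nat} (f : 'rV[R]_n -> R) (g x : 'rV[R]_n) : Prop :=
  forall eps : R, 0 < eps -> exists delta : R, 0 < delta /\
    forall h : 'rV[R]_n, enorm h < delta ->
      `|f (x + h) - f x - dotv g h| <= eps * enorm h.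

Definition grad_lipschitz_on {R : realType} {n : nat} (S : set 'rV[R]_n)
  (g : 'rV[R]_n -> 'rV[R]_n) (L : R) : Prop :=
  forall x y, S x -> S y -> enorm (g x - g y) <= L * enorm (x - y).

Definition edom {R : realType} {n : nat} (chi : 'rV[R]_n -> \bar R) : set 'rV[R]_n :=
  [set x | (chi x < +oo)%E].

Definition proper_fun {R : realType} {n : nat} (chi : 'rV[R]_n -> \bar R) : Prop :=
  (forall x, chi x != -oo%E) /\ (exists x, edom chi x).

Definition convex_ext {R : realType} {n : nat} (chi : 'rV[R]_n -> \bar R) : Prop :=
  forall (x y : 'rV[R]_n) (t : R), edom chi x -> edom chi y -> 0 <= t <= 1 ->
    (chi (t *: x + (1 - t) *: y)%R <= (t * fine (chi x) + (1 - t) * fine (chi y))%:E)%E.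

Definition lsc_ext {R : realType} {n : nat} (chi : 'rV[R]_n -> \bar R) : Prop :=
  forall (x : 'rV[R]_n) (a : R), (a%:E < chi x)%E ->
    exists delta : R, 0 < delta /\
      forall y, enorm (y - x) < delta -> (a%:E < chi y)%E.

Definition convex_real {R : realType} {n : nat} (chi : 'rV[R]_n -> R) : Prop :=
  forall (x y : 'rV[R]_n) (t : R), 0 <= t <= 1 ->
    chi (t *: x + (1 - t) *: y) <= t * chi x + (1 - t) * chi y.

Definition continuous_on_set {R : realType} {n : nat} (S : set 'rV[R]_n)
  (chi : 'rV[R]_n -> R) : Prop :=
  forall x, S x -> forall eps : R, 0 < eps -> exists delta : R, 0 < delta /\
    forall y, S y -> enorm (y - x) < delta -> `|chi y - chi x| < eps.

Definition subdiff_ext {R : realType} {n : nat} (chi : 'rV[R]_n -> \bar R)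
  (x : 'rV[R]_n) : set 'rV[R]_n :=
  [set s | edom chi x /\ forall y, ((fine (chi x) + dotv s (y - x))%:E <= chi y)%E].
Definition subdiff_real {R : realType} {n : nat} (chi : 'rV[R]_n -> R)
  (x : 'rV[R]_n) : set 'rV[R]_n :=
  [set s | forall y, chi x + dotv s (y - x) <= chi y].

(* ||S||_- := inf { ||s|| : s in S }  (= +oo if S is empty) *)
Definition inf_norm {R : realType} {n : nat} (S : set 'rV[R]_n) : \bar R :=
  ereal_inf [set (enorm s)%:E | s in S].

Definition subdiff_lagr {R : realType} {n m : nat}
  (gradf0 : 'rV[R]_n -> 'rV[R]_n) (chi0 : 'rV[R]_n -> \bar R)
  (gradf : 'I_m -> 'rV[R]_n -> 'rV[R]_n) (chi : 'I_m -> 'rV[R]_n -> R)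
  (lam : 'rV[R]_m) (x : 'rV[R]_n) : set 'rV[R]_n :=
  [set v | exists (s0 : 'rV[R]_n) (s : 'I_m -> 'rV[R]_n),
     subdiff_ext chi0 x s0 /\ (forall i, subdiff_real (chi i) x (s i)) /\
     v = gradf0 x + s0 + \sum_(i < m) lam 0 i *: (gradf i x + s i)].

Definition psi0 {R : realType} {n : nat} (f0 : 'rV[R]_n -> R) (chi0 : 'rV[R]_n -> \bar R)
  (x : 'rV[R]_n) : \bar R := ((f0 x)%:E + chi0 x)%E.
Definition psii {R : realType} {n m : nat} (f : 'I_m -> 'rV[R]_n -> R)
  (chi : 'I_m -> 'rV[R]_n -> R) (x : 'rV[R]_n) (i : 'I_m) : R := f i x + chi i x.

Definition batch_grad {R : realType} {n : nat} {T : Type}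
  (gradF : 'rV[R]_n -> T -> 'rV[R]_n) (b : nat -> nat) (xi : nat -> nat -> T)
  (x : nat -> 'rV[R]_n) (k : nat) : 'rV[R]_n :=
  (b k)%:R^-1 *: \sum_(j < b k) gradF (x k) (xi j k).

Definition psi0k {R : realType} {n : nat} (G xk : 'rV[R]_n) (gam : R)
  (chi0 : 'rV[R]_n -> \bar R) (y : 'rV[R]_n) : \bar R :=
  ((dotv G y + gam / 2 * enorm (y - xk) ^+ 2)%:E + chi0 y)%E.
Definition psiik {R : realType} {n m : nat} (f : 'I_m -> 'rV[R]_n -> R)
  (gradf : 'I_m -> 'rV[R]_n -> 'rV[R]_n) (chi : 'I_m -> 'rV[R]_n -> R)
  (Lv : 'rV[R]_m) (xk : 'rV[R]_n) (i : 'I_m) (y : 'rV[R]_n) : R :=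
  f i xk + dotv (gradf i xk) (y - xk) + Lv 0 i / 2 * enorm (y - xk) ^+ 2 + chi i y.

(* compactness in the (product = Euclidean) topology of R^n *)
Definition compact_rV {R : realType} {n : nat} (A : set 'rV[R]_n) : Prop :=
  @compact (matrix_matrix__canonical__normed_module_NormedModule R 1 n) A.

(* Main.v *)
Require Import Defs.
From HB Require Import structures.
From mathcomp Require Import all_boot all_order all_algebra.
From mathcomp Require Import all_classical all_reals all_analysis.
From mathcomp Require Import ring lra.
Import Order.TTheory GRing.Theory Num.Theory numFieldNormedType.Exports.
Local Open Scope ring_scope.
Local Open Scope classical_set_scope.
Set Implicit Arguments. Unset Strict Implicit.

Section Vec.
Variables (R : realType) (n : nat).
Implicit Types (u v w : 'rV[R]_n) (a : R).

Lemma dotvC u v : dotv u v = dotv v u.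
Proof. by apply: eq_bigr => i _; rewrite mulrC. Qed.
Lemma dotvDl u v w : dotv (u + v) w = dotv u w + dotv v w.
Proof. by rewrite /dotv -big_split; apply: eq_bigr => i _; rewrite !mxE mulrDl. Qed.
Lemma dotvZl a u v : dotv (a *: u) v = a * dotv u v.
Proof. by rewrite /dotv mulr_sumr; apply: eq_bigr => i _; rewrite !mxE mulrA. Qed.
Lemma dotvNl u v : dotv (- u) v = - dotv u v.
Proof. by rewrite -scaleN1r dotvZl mulN1r. Qed.
Lemma dotvBl u v w : dotv (u - v) w = dotv u w - dotv v w.
Proof. by rewrite dotvDl dotvNl. Qed.
Lemma dotvDr u v w : dotv w (u + v) = dotv w u + dotv w v.
Proof. by rewrite dotvC dotvDl !(dotvC w). Qed.
Lemma dotvZr a u v : dotv v (a *: u) = a * dotv v u.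
Proof. by rewrite dotvC dotvZl dotvC. Qed.
Lemma dotvNr u v : dotv v (- u) = - dotv v u.
Proof. by rewrite dotvC dotvNl dotvC. Qed.
Lemma dotvBr u v w : dotv w (u - v) = dotv w u - dotv w v.
Proof. by rewrite dotvDr dotvNr. Qed.
Lemma dotv0l v : dotv 0 v = 0.
Proof. by rewrite /dotv big1 // => i _; rewrite mxE mul0r. Qed.
Lemma dotv_suml m (F : 'I_m -> 'rV[R]_n) v :
  dotv (\sum_(i < m) F i) v = \sum_(i < m) dotv (F i) v.
Proof.
elim/big_ind2: _ => //; first by rewrite dotv0l.
by move=> x1 y1 x2 y2 <- <-; rewrite dotvDl.
Qed.
Lemma dotv_ge0 u : 0 <= dotv u u.
Proof. by apply: sumr_ge0 => i _; rewrite -expr2 sqr_ge0. Qed.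
Lemma dotv_eq0 u : dotv u u = 0 -> u = 0.
Proof.
move=> /eqP; rewrite psumr_eq0; last by move=> i _; rewrite -expr2 sqr_ge0.
move=> /allP H; apply/rowP => i; rewrite mxE.
have := H i (mem_index_enum _); rewrite -expr2 sqrf_eq0 /=.
by move/eqP.
Qed.
Lemma enorm_ge0 u : 0 <= enorm u.
Proof. exact: sqrtr_ge0. Qed.
Lemma enorm_sq u : enorm u ^+ 2 = dotv u u.
Proof. by rewrite /enorm sqr_sqrtr // dotv_ge0. Qed.
Lemma enormZ a u : enorm (a *: u) = `|a| * enorm u.
Proof.
by rewrite /enorm dotvZl dotvZr mulrA -expr2 sqrtrM ?sqr_ge0 // sqrtr_sqr.
Qed.
Lemma enormN u : enorm (- u) = enorm u.
Proof. by rewrite -scaleN1r enormZ normrN normr1 mul1r. Qed.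
Lemma enorm0 : enorm (0 : 'rV[R]_n) = 0.
Proof. by rewrite /enorm dotv0l sqrtr0. Qed.

Lemma CS u v : dotv u v <= enorm u * enorm v.
Proof.
set p := enorm u; set q := enorm v.
have H := dotv_ge0 (q *: u - p *: v).
rewrite dotvBl !dotvBr !dotvZl !dotvZr -!enorm_sq -/p -/q (dotvC v u) in H.
have [p0|pgt0] := eqVneq p 0.
  have u0 : u = 0 by apply: dotv_eq0; rewrite -enorm_sq -/p p0 expr0n.
  by rewrite u0 dotv0l p0 mul0r.
have [q0|qgt0] := eqVneq q 0.
  have v0 : v = 0 by apply: dotv_eq0; rewrite -enorm_sq -/q q0 expr0n.
  by rewrite v0 dotvC dotv0l q0 mulr0.
have pp : 0 < p by rewrite lt_def pgt0 enorm_ge0.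
have qp : 0 < q by rewrite lt_def qgt0 enorm_ge0.
have pq : 0 < p * q by rewrite mulr_gt0.
rewrite -(ler_pM2l pq); nra.
Qed.

Lemma enormD u v : enorm (u + v) <= enorm u + enorm v.
Proof.
rewrite -ler_sqr ?nnegrE ?addr_ge0 ?enorm_ge0 //.
rewrite enorm_sq dotvDl !dotvDr -!enorm_sq (dotvC v u).
have := CS u v; nra.
Qed.

Lemma enorm_sum m (F : 'I_m -> 'rV[R]_n) :
  enorm (\sum_(i < m) F i) <= \sum_(i < m) enorm (F i).
Proof.
elim/big_ind2: _ => //; first by rewrite enorm0.
by move=> x1 y1 x2 y2 H1 H2; apply: le_trans (enormD _ _) _; apply: lerD.
Qed.

Lemma sqr_sub_le u v : enorm (u - v) ^+ 2 <= 2 * enorm u ^+ 2 + 2 * enorm v ^+ 2.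
Proof.
have H := dotv_ge0 (u + v).
rewrite enorm_sq dotvBl !dotvBr -!enorm_sq.
rewrite dotvDl !dotvDr -!enorm_sq (dotvC v u) in H.
rewrite (dotvC v u); lra.
Qed.

Lemma young u v b : 0 < b -> - dotv u v <= enorm u ^+ 2 / (2 * b) + b / 2 * enorm v ^+ 2.
Proof.
move=> b0.
have H := dotv_ge0 (u + b *: v).
rewrite dotvDl !dotvDr !dotvZl !dotvZr -!enorm_sq (dotvC v u) in H.
set U := enorm u ^+ 2 in H *; set V := enorm v ^+ 2 in H *; set W := dotv u v in H *.
have -> : U / (2 * b) + b / 2 * V = (U + b * W + b * (W + b * V)) / (2 * b) - W.
  by field; rewrite gt_eqF.
rewrite lerBrDr addrC subrr divr_ge0 //; lra.
Qed.

End Vec.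

Definition ed_deriv {R : realType} (psi : R -> R) t D := forall e : R, 0 < e ->
  exists d : R, 0 < d /\ forall s, `|s| < d -> `|psi (t + s) - psi t - s * D| <= e * `|s|.

Lemma ed_is_derive (R : realType) (psi : R -> R) t D : ed_deriv psi t D -> is_derive t 1 psi D.
Proof.
move=> H.
have cv : h^-1 *: ((psi \o shift t) (h *: (1:R)) - psi t) @[h --> (0:R)^'] --> D.
  apply/cvgrPdist_le => e e0.
  have [d [d0 Hd]] := H e e0.
  apply: filterS (dnbhs_ball (0:R) d0) => s [] /= bs s0.
  have bs' : `|s| < d by move: bs; rewrite /ball /= sub0r normrN.
  have := Hd s bs'.
  have -> : s%:A + t = t + s by rewrite /GRing.scale /= mulr1 addrC.
  have sn : `|s| != 0 by rewrite normr_eq0; apply/eqP.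
  have sp : 0 < `|s| by rewrite lt_def sn normr_ge0.
  rewrite /GRing.scale /=.
  have -> : D - s^-1 * (psi (t + s) - psi t) = - (psi (t + s) - psi t - s * D) / s.
    by field; apply/eqP.
  rewrite normrM normrN normrV ?unitfE; last by apply/eqP.
  by move=> h; rewrite ler_pdivrMr //.
by apply: DeriveDef; [apply/cvg_ex; exists D | apply: cvg_lim].
Qed.

Lemma ed_comp (R : realType) n (f : 'rV[R]_n -> R) g x h t :
  has_grad f g (x + t *: h) -> ed_deriv (fun s => f (x + s *: h)) t (dotv g h).
Proof.
move=> Hg e e0.
have h1 : 0 < enorm h + 1 by rewrite ltr_wpDl ?enorm_ge0.
have [dl [dl0 Hdl]] := Hg (e / (enorm h + 1)) (divr_gt0 e0 h1).
exists (dl / (enorm h + 1)); split; first by rewrite divr_gt0.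
move=> s hs.
have Hn : enorm (s *: h) < dl.
  rewrite enormZ; rewrite ltr_pdivlMr // in hs.
  apply: le_lt_trans hs; apply: ler_wpM2l; first exact: normr_ge0.
  by rewrite lerDl.
have := Hdl _ Hn.
rewrite scalerDl addrA dotvZr enormZ.
move=> H1; apply: le_trans H1 _.
have ha : enorm h / (enorm h + 1) <= 1 by rewrite ler_pdivrMr // mul1r lerDl.
have -> : e / (enorm h + 1) * (`|s| * enorm h) = e * `|s| * (enorm h / (enorm h + 1)).
  by field; rewrite gt_eqF.
have : 0 <= e * `|s| by rewrite mulr_ge0 ?normr_ge0 ?(ltW e0).
nra.
Qed.

Lemma ed_quad (R : realType) (phi : R -> R) t D (sg a c : R) :
  ed_deriv phi t D -> 0 <= c -> `|sg| = 1 ->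
  ed_deriv (fun s => sg * (phi s - s * a) - c * s ^+ 2) t (sg * (D - a) - 2 * c * t).
Proof.
move=> H c0 sg1 e e0.
have e2 : 0 < e / 2 by rewrite divr_gt0.
have [d1 [d10 Hd1]] := H _ e2.
have c1 : 0 < 2 * c + 1 by rewrite ltr_wpDl ?mulr_ge0.
exists (Num.min d1 (e / (2 * c + 1))); split.
  by rewrite lt_min d10 divr_gt0.
move=> s; rewrite lt_min => /andP[hs1 hs2].
have -> : sg * (phi (t + s) - (t + s) * a) - c * (t + s) ^+ 2 -
   (sg * (phi t - t * a) - c * t ^+ 2) - s * (sg * (D - a) - 2 * c * t)
   = sg * (phi (t + s) - phi t - s * D) - c * s ^+ 2 by ring.
apply: le_trans (ler_normB _ _) _.
rewrite normrM sg1 mul1r.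
have := Hd1 s hs1 => h1.
have h2 : `|c * s ^+ 2| <= e / 2 * `|s|.
  rewrite normrM normrX (ger0_norm c0) expr2 mulrA mulrC.
  rewrite ltr_pdivlMr // in hs2.
  have := normr_ge0 s; nra.
lra.
Qed.

Lemma descent (R : realType) n (S : set 'rV[R]_n) (f : 'rV[R]_n -> R) g L x y :
  (forall u v (t : R), S u -> S v -> 0 <= t <= 1 -> S (t *: u + (1 - t) *: v)) ->
  (forall z, S z -> has_grad f (g z) z) -> grad_lipschitz_on S g L -> 0 <= L ->
  S x -> S y ->
  `|f y - f x - dotv (g x) (y - x)| <= L / 2 * enorm (y - x) ^+ 2.
Proof.
move=> convS Hg HL L0 Sx Sy.
set h := y - x.
have pE : forall t : R, x + t *: h = t *: y + (1 - t) *: x.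
  by move=> t; rewrite /h scalerBr scalerBl scale1r addrCA addrA; congr (_ + _); rewrite addrC. 

have Sp : forall t : R, 0 <= t <= 1 -> S (x + t *: h).
  by move=> t ht; rewrite pE; apply: convS.
set a := dotv (g x) h.
set c := L / 2 * enorm h ^+ 2.
have c0 : 0 <= c by rewrite mulr_ge0 ?divr_ge0 ?exprn_ge0 ?enorm_ge0.
have key : forall sg : R, `|sg| = 1 -> sg * (f y - f x - a) - c <= 0.
  move=> sg sg1.
  pose psi := fun s : R => sg * (f (x + s *: h) - s * a) - c * s ^+ 2.
  pose D := fun t : R => sg * (dotv (g (x + t *: h)) h - a) - 2 * c * t.
  have hd : forall t : R, 0 <= t <= 1 -> is_derive t 1 psi (D t).
    move=> t ht; apply: ed_is_derive; apply: ed_quad => //.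
    by apply: ed_comp; apply: Hg; apply: Sp.
  have [t0 t0in Heq] : exists2 t0, t0 \in `]0, 1[%R & psi 1 - psi 0 = D t0 * (1 - 0).
    apply: MVT => //.
      move=> t; rewrite in_itv /= => /andP[t1 t2]; apply: hd.
      by rewrite !ltW.
    apply: derivable_within_continuous => t; rewrite in_itv /= => ht.
    by have [] := hd t ht.
  have ps1 : psi 1 = sg * (f y - a) - c.
    rewrite /psi; have -> : x + 1 *: h = y by rewrite scale1r /h addrC subrK.
    by rewrite /psi mul1r expr1n mulr1.
  have ps0 : psi 0 = sg * f x.
    by rewrite /psi scale0r addr0 mul0r subr0 expr0n /= mulr0 subr0.
  move: t0in; rewrite in_itv /= => /andP[t01 t02].
  have Dle : D t0 <= 0.
    rewrite /D.
    have -> : sg * (dotv (g (x + t0 *: h)) h - a) = dotv (sg *: (g (x + t0 *: h) - g x)) h.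
      by rewrite dotvZl dotvBl.
    have := CS (sg *: (g (x + t0 *: h) - g x)) h; rewrite enormZ sg1 mul1r => hcs.
    have := HL _ _ (Sp t0 (andb_true_intro (conj (ltW t01) (ltW t02)))) Sx.
    rewrite addrAC subrr add0r enormZ (gtr0_norm t01) => H1.
    have hh := enorm_ge0 h.
    rewrite /c; move: hcs H1 hh; set E := enorm (_ - _); set d := dotv _ _; set Nh := enorm h.
    move=> hcs H1 hh.
    have -> : 2 * (L / 2 * Nh ^+ 2) * t0 = L * (t0 * Nh) * Nh by field.
    nra.
  move: Heq; rewrite ps1 ps0 subr0 mulr1 => Heq.
  have : sg * (f y - a) - c - sg * f x <= 0 by rewrite Heq.
  by move=> H2; apply: le_trans _ H2; rewrite le_eqVlt; apply/orP; left; apply/eqP; ring.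
rewrite ler_norml; apply/andP; split.
  have := key (-1) ltac:(by rewrite normrN normr1); lra.
have := key 1 ltac:(by rewrite normr1); lra.
Qed.

Lemma telesc (R : realType) (q : nat -> R) N :
  \sum_(k < N) (q k - q k.+1) = q 0%N - q N.
Proof.
elim: N => [|N IH]; first by rewrite big_ord0 subrr.
by rewrite big_ord_recr /= IH addrA subrK.
Qed.

Lemma wtelesc (R : realType) (al a q e : nat -> R) K :
  (forall k, (k <= K)%N -> 0 <= al k) ->
  (forall k, (k <= K)%N -> al k <= al K) ->
  (forall k, 0 <= a k) -> (forall k, a k <= q k - q k.+1 + e k) ->
  (forall k, 0 <= q k) ->
  \sum_(k < K.+1) al k * a k <= al K * (q 0%N + \sum_(k < K.+1) e k).
Proof.
move=> al0 alK a0 aq q0.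
apply: le_trans (_ : \sum_(k < K.+1) al K * (q k - q k.+1 + e k) <= _).
  apply: ler_sum => k _.
  have hk : (k <= K)%N by rewrite -ltnS.
  have := al0 k hk; have := alK k hk; have := a0 k; have := aq k.
  have := al0 K (leqnn K); nra.
rewrite -mulr_sumr big_split /= telesc.
apply: ler_wpM2l; first exact: al0.
have := q0 K.+1; lra.
Qed.

Lemma alpha_mono (R : realType) (al : nat -> R) K :
  (forall k, (k < K)%N -> al k <= al k.+1) -> forall k, (k <= K)%N -> al k <= al K.
Proof.
move=> H k hk.
have : forall j, (j <= K - k)%N -> al k <= al (k + j)%N.
  elim => [|j IH] hj; first by rewrite addn0.
  apply: le_trans (IH (ltnW hj)) _; rewrite addnS; apply: H.
  by rewrite -ltn_subRL.
by move=> /(_ (K - k)%N (leqnn _)); rewrite subnKC.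
Qed.

Unset Implicit Arguments. Set Strict Implicit.

Theorem mainTheorem11
  (R : realType) (n m : nat)
  (* problem data *)
  (f0 : 'rV[R]_n -> R) (gradf0 : 'rV[R]_n -> 'rV[R]_n) (chi0 : 'rV[R]_n -> \bar R)
  (f : 'I_m -> 'rV[R]_n -> R) (gradf : 'I_m -> 'rV[R]_n -> 'rV[R]_n)
  (chi : 'I_m -> 'rV[R]_n -> R)
  (L0 : R) (Lv : 'rV[R]_m) (eta : 'rV[R]_m) (psi0star : R)
  (* stochastic oracle *)
  (dxi : measure_display) (Xi : measurableType dxi) (P : probability Xi R)
  (F : 'rV[R]_n -> Xi -> R) (gradF : 'rV[R]_n -> Xi -> 'rV[R]_n) (sigma : R)
  (* algorithm data *)
  (x : nat -> 'rV[R]_n) (etak : nat -> 'rV[R]_m) (lam : nat -> 'rV[R]_m)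
  (b : nat -> nat) (xi : nat -> nat -> Xi) (gamma beta : nat -> R)
  (B : R) (alpha : nat -> R) (K : nat) :
  (* standing assumptions *)
  proper_fun chi0 -> convex_ext chi0 -> lsc_ext chi0 ->
  (forall i, convex_real (chi i)) ->
  (forall i, continuous_on_set (edom chi0) (chi i)) ->
  0 < L0 -> (forall i, 0 <= Lv 0 i) ->
  (forall y, edom chi0 y -> has_grad f0 (gradf0 y) y) ->
  grad_lipschitz_on (edom chi0) gradf0 L0 ->
  (forall i y, edom chi0 y -> has_grad (f i) (gradf i y) y) ->
  (forall i, grad_lipschitz_on (edom chi0) (gradf i) (Lv 0 i)) ->
  (* feasible set nonempty and compact; psi0star is the (finite) optimal value *)
  (exists y, edom chi0 y /\ forall i, psii f chi y i <= eta 0 i) ->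
  compact_rV [set y | edom chi0 y /\ forall i, psii f chi y i <= eta 0 i] ->
  (forall y, edom chi0 y -> (forall i, psii f chi y i <= eta 0 i) ->
     (psi0star%:E <= psi0 f0 chi0 y)%E) ->
  (forall e : R, 0 < e -> exists y, edom chi0 y /\
     (forall i, psii f chi y i <= eta 0 i) /\ (psi0 f0 chi0 y < (psi0star + e)%:E)%E) ->
  (* stochastic first-order oracle *)
  (forall xi0 y, has_grad (F^~ xi0) (gradF y xi0) y) ->
  (forall y, P.-integrable setT (fun t => (F y t)%:E) /\
             (\int[P]_t (F y t)%:E = (f0 y)%:E)%E) ->
  (forall y j, P.-integrable setT (fun t => (gradF y t 0 j)%:E) /\
             (\int[P]_t (gradF y t 0 j)%:E = (gradf0 y 0 j)%:E)%E) ->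
  (forall y, (\int[P]_t ((enorm (gradF y t - gradf0 y)) ^+ 2)%:E <= (sigma ^+ 2)%:E)%E) ->
  (* algorithm LCSPG *)
  edom chi0 (x 0%N) ->
  (forall i, psii f chi (x 0%N) i < etak 0%N 0 i) ->
  (forall k i, etak k 0 i < etak k.+1 0 i) ->
  (forall k i, etak k 0 i < eta 0 i) ->
  (forall k, (0 < b k)%N) ->
  (forall k, 0 < gamma k) ->
  (forall k, edom chi0 (x k.+1) /\
     (forall i, psiik f gradf chi Lv (x k) i (x k.+1) <= etak k 0 i) /\
     (forall y, edom chi0 y -> (forall i, psiik f gradf chi Lv (x k) i y <= etak k 0 i) ->
        (psi0k (batch_grad gradF b xi x k) (x k) (gamma k) chi0 (x k.+1)
           <= psi0k (batch_grad gradF b xi x k) (x k) (gamma k) chi0 y)%E)) ->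
  (* Lagrange multipliers of the subproblems *)
  (forall k, (forall i, 0 <= lam k.+1 0 i) /\
     (exists (s0 : 'rV[R]_n) (s : 'I_m -> 'rV[R]_n),
        subdiff_ext chi0 (x k.+1) s0 /\ (forall i, subdiff_real (chi i) (x k.+1) (s i)) /\
        batch_grad gradF b xi x k + gamma k *: (x k.+1 - x k) + s0
        + \sum_(i < m) lam k.+1 0 i *:
            (gradf i (x k) + Lv 0 i *: (x k.+1 - x k) + s i) = 0) /\
     (forall i, lam k.+1 0 i * (psiik f gradf chi Lv (x k) i (x k.+1) - etak k 0 i) = 0)) ->
  (* parameters *)
  (forall k, L0 / 2 < gamma k) ->
  (forall k, 0 < beta k /\ beta k < 2 * gamma k - L0) ->
  0 < B -> (forall k, enorm (lam k.+1) <= B) ->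
  (forall k, (k <= K)%N -> 0 <= alpha k) ->
  (forall k, (k < K)%N -> alpha k <= alpha k.+1) ->
  let zeta := fun k => batch_grad gradF b xi x k - gradf0 (x k) in
  let D := Num.sqrt ((fine (psi0 f0 chi0 (x 0%N)) - psi0star) / L0) in
  let c := fun k => alpha k * (2 * gamma k - beta k - L0) in
  let den := fun k => (gamma k + L0 + 2 * B * enorm Lv) ^+ 2 in
  (\sum_(k < K.+1)
     ((c k / (4 * den k))%:E *
      (inf_norm (subdiff_lagr gradf0 chi0 gradf chi (lam k.+1) (x k.+1)) *
       inf_norm (subdiff_lagr gradf0 chi0 gradf chi (lam k.+1) (x k.+1))))
   <= (L0 * D ^+ 2 * alpha K
       + \sum_(k < K.+1) ((c k / (2 * den k) + alpha K / (2 * beta k))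
                          * enorm (zeta k) ^+ 2))%:E)%E
  /\
  \sum_(k < K.+1) c k * (\sum_(i < m) lam k.+1 0 i * `|psii f chi (x k.+1) i - eta 0 i|)
   <= 2 * B * L0 * enorm Lv * D ^+ 2 * alpha K
      + B * enorm Lv * \sum_(k < K.+1) alpha K * enorm (zeta k) ^+ 2 / beta k
      + B * \sum_(k < K.+1) c k * enorm (eta - etak k).
Proof.
move=> chi0prop chi0conv _ _ _ L0pos Lvnn gf0 lip0 gfi lipi _ _ lowb _ _ _ _ _
  x0dom x0feas etainc etalt _ gampos alg kkt gamL betab Bpos lamB alpha0 alphainc
  zeta D c den.
set S := edom chi0.
have convS : forall u v (t : R), S u -> S v -> 0 <= t <= 1 -> S (t *: u + (1 - t) *: v).
  move=> u v t Su Sv ht; have := chi0conv u v t Su Sv ht.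
  by rewrite /S /edom /= => /le_lt_trans; apply; apply: ltry.
have Sx : forall k, S (x k) by case => // k; case: (alg k).
have fin : forall z, S z -> chi0 z = (fine (chi0 z))%:E.
  move=> z; rewrite /S /edom /=; case: chi0prop => /(_ z) + _.
  by case: (chi0 z).
have desc0 := fun k => descent convS gf0 lip0 (ltW L0pos) (Sx k) (Sx k.+1).
have desci := fun k i => descent convS (gfi i) (lipi i) (Lvnn i) (Sx k) (Sx k.+1).
have upper : forall k i, psii f chi (x k.+1) i <= psiik f gradf chi Lv (x k) i (x k.+1) /\
   psiik f gradf chi Lv (x k) i (x k.+1) - psii f chi (x k.+1) i
     <= Lv 0 i * enorm (x k.+1 - x k) ^+ 2.
  move=> k i; have := desci k i; rewrite ler_norml /psii /psiik => /andP[h1 h2].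
  split; lra.
have feas : forall k i, psii f chi (x k) i <= etak k 0 i.
  elim => [|k IH] i; first exact: ltW.
  have [h1 _] := upper k i; have [_ [h2 _]] := alg k.
  have := h2 i; have := etainc k i; lra.
have feaseta : forall k i, psii f chi (x k) i <= eta 0 i.
  by move=> k i; have := feas k i; have := etalt k i; lra.
have lowk : forall k, psi0star <= f0 (x k) + fine (chi0 (x k)).
  move=> k; have := lowb (x k) (Sx k) (feaseta k).
  by rewrite /psi0 (fin _ (Sx k)) -EFinD lee_fin.
set q := fun k => f0 (x k) + fine (chi0 (x k)) - psi0star.
have q0 : forall k, 0 <= q k by move=> k; rewrite /q subr_ge0.
have step : forall k, (2 * gamma k - beta k - L0) / 2 * enorm (x k.+1 - x k) ^+ 2
    <= q k - q k.+1 + enorm (zeta k) ^+ 2 / (2 * beta k).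
  move=> k.
  have [lam0 [[s0 [s [hs0 [hs hE]]]] hsl]] := kkt k.
  have e1 : x k - x k.+1 = - (x k.+1 - x k) by rewrite opprB.
  have hdot := congr1 (fun v => dotv v (x k.+1 - x k)) hE.
  rewrite /= dotv0l !dotvDl dotvZl dotv_suml in hdot.
  have hsum : 0 <= \sum_(i < m) dotv (lam k.+1 0 i *: (gradf i (x k)
       + Lv 0 i *: (x k.+1 - x k) + s i)) (x k.+1 - x k).
    apply: sumr_ge0 => i _; rewrite dotvZl !dotvDl dotvZl -enorm_sq.
    have := hs i (x k); rewrite e1 dotvNr => h1.
    have := hsl i; have := lam0 i; have := feas k i; rewrite /psiik /psii => h2 h3 h4.
    set N := enorm (x k.+1 - x k) ^+ 2 in h4 *.
    have hN : 0 <= Lv 0 i * N by rewrite mulr_ge0 ?Lvnn ?sqr_ge0.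
    set T := (X in 0 <= _ * X).
    set Pk := (X in lam k.+1 0 i * X = 0) in h4.
    have hTP : 0 <= T - Pk by rewrite /T /Pk; lra.
    have := mulr_ge0 h3 hTP; nra.
  have h0 : fine (chi0 (x k.+1)) - dotv s0 (x k.+1 - x k) <= fine (chi0 (x k)).
    have [_ /(_ (x k))] := hs0; rewrite (fin _ (Sx k)) lee_fin.
    by rewrite e1 dotvNr.
  have := desc0 k; rewrite ler_norml => /andP[_ hd0].
  have hz : dotv (gradf0 (x k)) (x k.+1 - x k)
      = dotv (batch_grad gradF b xi x k) (x k.+1 - x k) - dotv (zeta k) (x k.+1 - x k).
    by rewrite /zeta dotvBl; ring.
  have hy := young (zeta k) (x k.+1 - x k) (betab k).1.
  rewrite -enorm_sq in hdot.
  rewrite /q; lra.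
have gb : forall k, exists v, subdiff_lagr gradf0 chi0 gradf chi (lam k.+1) (x k.+1) v /\
    enorm v ^+ 2 <= 2 * den k * enorm (x k.+1 - x k) ^+ 2 + 2 * enorm (zeta k) ^+ 2.
  move=> k; have [lam0 [[s0 [s [hs0 [hs hE]]]] hsl]] := kkt k.
  pose v := gradf0 (x k.+1) + s0 + \sum_(i < m) lam k.+1 0 i *: (gradf i (x k.+1) + s i).
  exists v; split; first by exists s0, s.
  pose W := \sum_(i < m) lam k.+1 0 i *:
      (gradf i (x k.+1) - gradf i (x k) - Lv 0 i *: (x k.+1 - x k)).
  pose w := gradf0 (x k.+1) - gradf0 (x k) - gamma k *: (x k.+1 - x k) + W.
  have hCA : \sum_(i < m) lam k.+1 0 i *: (gradf i (x k.+1) + s i)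
      - \sum_(i < m) lam k.+1 0 i *: (gradf i (x k) + Lv 0 i *: (x k.+1 - x k) + s i) = W.
    rewrite -sumrB; apply: eq_bigr => i _; rewrite -scalerBr; congr (_ *: _).
    by apply/rowP => j; rewrite !mxE; ring.
  have hv : v = w - zeta k.
    apply/rowP => j.
    have := congr1 (fun M : 'rV[R]_n => M 0 j) hE; have := congr1 (fun M : 'rV[R]_n => M 0 j) hCA.
    rewrite /v /w /zeta !mxE /= => h1 h2; lra.
  have hW : enorm W <= 2 * B * enorm Lv * enorm (x k.+1 - x k).
    apply: le_trans (enorm_sum _) _.
    apply: le_trans (_ : \sum_(i < m) lam k.+1 0 i * (2 * Lv 0 i * enorm (x k.+1 - x k)) <= _).
      apply: ler_sum => i _; rewrite enormZ (ger0_norm (lam0 i)); apply: ler_wpM2l; first exact: lam0.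
      apply: le_trans (enormD _ _) _; rewrite enormN enormZ (ger0_norm (Lvnn i)).
      have := lipi i _ _ (Sx k.+1) (Sx k); lra.
    have -> : \sum_(i < m) lam k.+1 0 i * (2 * Lv 0 i * enorm (x k.+1 - x k))
        = 2 * enorm (x k.+1 - x k) * dotv (lam k.+1) Lv.
      by rewrite /dotv mulr_sumr; apply: eq_bigr => i _; ring.
    have h1 : dotv (lam k.+1) Lv <= B * enorm Lv :=
      le_trans (CS _ _) (ler_wpM2r (enorm_ge0 _) (lamB k)).
    have := enorm_ge0 (x k.+1 - x k); nra.
  have hw : enorm w <= (gamma k + L0 + 2 * B * enorm Lv) * enorm (x k.+1 - x k).
    apply: le_trans (enormD _ _) _.
    apply: le_trans (lerD (enormD _ _) (lexx _)) _.
    rewrite enormN enormZ (gtr0_norm (gampos k)).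
    have := lip0 _ _ (Sx k.+1) (Sx k); lra.
  rewrite hv; apply: le_trans (sqr_sub_le _ _) _.
  have := enorm_ge0 w; rewrite /den; nra.
have alK := alpha_mono alphainc.
have cpos : forall k, 0 < 2 * gamma k - beta k - L0.
  by move=> k; have := betab k; lra.
have c0 : forall k, (k <= K)%N -> 0 <= c k.
  by move=> k hk; rewrite /c mulr_ge0 ?alpha0 // ltW.
have aK := wtelesc (a := fun k => (2 * gamma k - beta k - L0) / 2 * enorm (x k.+1 - x k) ^+ 2)
  (e := fun k => enorm (zeta k) ^+ 2 / (2 * beta k)) alpha0 alK
  (fun k => mulr_ge0 (divr_ge0 (ltW (cpos k)) (ler0n _ 2)) (sqr_ge0 _)) step q0.
have q0D : L0 * D ^+ 2 = q 0%N.
  rewrite /D sqr_sqrtr; last first.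
    rewrite divr_ge0 ?(ltW L0pos) //.
    by rewrite /psi0 (fin _ (Sx 0%N)) -EFinD /= subr_ge0; apply: lowk.
  rewrite /psi0 (fin _ (Sx 0%N)) -EFinD /= /q; field; exact: lt0r_neq0.
have den0 : forall k, 0 < den k.
  move=> k; rewrite /den exprn_gt0 //; have := enorm_ge0 Lv; have := gampos k.
  have := L0pos; have := Bpos; nra.
split.
  apply: (@le_trans _ _ ((\sum_(k < K.+1) (c k / (4 * den k) *
     (2 * den k * enorm (x k.+1 - x k) ^+ 2 + 2 * enorm (zeta k) ^+ 2)))%R%:E)%E).
    rewrite -sumEFin; apply: lee_sum => k _.
    have [v [hv hvb]] := gb k.
    set I := inf_norm _.
    have hI : (I <= (enorm v)%:E)%E by apply: ereal_inf_lbound; exists v.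
    have hI0 : (0 <= I)%E.
      by apply: le_ereal_inf_tmp => _ [u _ <-]; rewrite lee_fin enorm_ge0.
    have hk : (k <= K)%N by rewrite -ltnS.
    rewrite [X in (_ <= X)%E]EFinM; apply: lee_wpmul2l.
      by rewrite lee_fin divr_ge0 ?c0 // mulr_ge0 // ltW.
    apply: le_trans (lee_pmul hI0 hI0 hI hI) _.
    by rewrite -EFinM lee_fin -expr2.
  rewrite lee_fin.
  have E1 : forall k, c k / (4 * den k) * (2 * den k * enorm (x k.+1 - x k) ^+ 2
      + 2 * enorm (zeta k) ^+ 2) = alpha k * ((2 * gamma k - beta k - L0) / 2
      * enorm (x k.+1 - x k) ^+ 2) + c k / (2 * den k) * enorm (zeta k) ^+ 2.
    by move=> k; rewrite /c; field; exact: lt0r_neq0 (den0 k).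
  under eq_bigr => k _ do rewrite E1.
  rewrite big_split /=.
  have E2 : \sum_(k < K.+1) (c k / (2 * den k) + alpha K / (2 * beta k)) * enorm (zeta k) ^+ 2
     = \sum_(k < K.+1) c k / (2 * den k) * enorm (zeta k) ^+ 2
       + alpha K * \sum_(k < K.+1) enorm (zeta k) ^+ 2 / (2 * beta k).
    rewrite mulr_sumr -big_split; apply: eq_bigr => k _ /=.
    by field; rewrite !lt0r_neq0 // (betab k).1.
  rewrite E2 q0D; lra.
have sk : forall k, \sum_(i < m) lam k.+1 0 i * `|psii f chi (x k.+1) i - eta 0 i|
    <= B * enorm (eta - etak k) + B * enorm Lv * enorm (x k.+1 - x k) ^+ 2.
  move=> k; have [lam0 [_ hsl]] := kkt k.
  apply: (le_trans (_ : _ <= dotv (lam k.+1) (eta - etak k)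
      + dotv (lam k.+1) Lv * enorm (x k.+1 - x k) ^+ 2) _).
    rewrite /dotv mulr_suml -big_split; apply: ler_sum => i _ /=; rewrite !mxE.
    have [h1 h2] := upper k i; have h3 := (alg k).2.1 i.
    have h4 := hsl i; have h5 := lam0 i.
    rewrite ler0_norm ?subr_le0 ?feaseta //.
    set N := enorm (x k.+1 - x k) ^+ 2 in h2 *.
    have h6 : 0 <= Lv 0 i * N - (psiik f gradf chi Lv (x k) i (x k.+1)
       - psii f chi (x k.+1) i) by rewrite subr_ge0.
    have := mulr_ge0 h5 h6; lra.
  have h1 : dotv (lam k.+1) Lv <= B * enorm Lv :=
    le_trans (CS _ _) (ler_wpM2r (enorm_ge0 _) (lamB k)).
  have h2 : dotv (lam k.+1) (eta - etak k) <= B * enorm (eta - etak k) :=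
    le_trans (CS _ _) (ler_wpM2r (enorm_ge0 _) (lamB k)).
  have := sqr_ge0 (enorm (x k.+1 - x k)); nra.
apply: (le_trans (_ : _ <= \sum_(k < K.+1) c k * (B * enorm (eta - etak k)
   + B * enorm Lv * enorm (x k.+1 - x k) ^+ 2)) _).
  apply: ler_sum => k _; apply: ler_wpM2l; last exact: sk.
  by apply: c0; rewrite -ltnS.
have E3 : \sum_(k < K.+1) c k * (B * enorm (eta - etak k)
   + B * enorm Lv * enorm (x k.+1 - x k) ^+ 2)
   = B * \sum_(k < K.+1) c k * enorm (eta - etak k) + 2 * B * enorm Lv *
     \sum_(k < K.+1) alpha k * ((2 * gamma k - beta k - L0) / 2 * enorm (x k.+1 - x k) ^+ 2).
  rewrite !mulr_sumr -big_split; apply: eq_bigr => k _ /=; by rewrite /c; field.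
have E4 : \sum_(k < K.+1) alpha K * enorm (zeta k) ^+ 2 / beta k
   = 2 * (alpha K * \sum_(k < K.+1) enorm (zeta k) ^+ 2 / (2 * beta k)).
  rewrite !mulr_sumr; apply: eq_bigr => j _ /=.
  by field; rewrite lt0r_neq0 // (betab j).1.
rewrite E3 E4.
have hBL : 0 <= 2 * B * enorm Lv by rewrite mulr_ge0 ?enorm_ge0 // mulr_ge0 // ltW.
have := ler_wpM2l hBL aK.
have -> : 2 * B * L0 * enorm Lv * D ^+ 2 * alpha K = 2 * B * enorm Lv * alpha K * (L0 * D ^+ 2).
  by ring.
rewrite q0D; nra.
Qed.
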